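(* In the setting below, $\hat{w}_t$ is strictly increasing in $t$. Also, if $\eta \geq \eta_0$, then $\hat{w}_t \geq \gamma\eta/2 + \gamma(t-1)/16$ for all integers $1 \leq t \leq \tau$, and in particular $\hat{w}_t \geq 8\tilde{\lambda}$ for all $t \geq 1$.
   Context: Dimension $d=2$. Data $x_1,\dots,x_n\in\mathbb{R}^2$ with $\|x_i\|\le 1$, linearly separable (some $w$ has $\langle w,x_i\rangle>0$ for all $i$). $F(w) = \frac{1}{n}\sum_{i=1}^n \log(1+\exp(-\langle w, x_i\rangle))$. Maximum margin $\gamma = \max_{\|w\|=1}\min_i \langle w, x_i\rangle$ with maximizer the unit vector $w_*$. Gradient descent: $w_0=0$, $w_{t+1} = w_t - \eta\nabla F(w_t)$ with constant $\eta>0$. $\hat{w}_t = \langle w_t, w_*\rangle$. $\tau = \min\{t\ge 0: F(w_t)\le 1/(8\eta)\}$. $\eta_0 = \max(n, \frac{32}{\gamma^2}\log\frac{256}{\gamma^2})$. $\tilde{\lambda} = \log(8\eta)/\gamma$. *)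

(* Defs.v *)
From Stdlib Require Import Reals Lra.
From Coquelicot Require Import Coquelicot.
Open Scope R_scope.

Definition vec2 := (R * R)%type.
Definition inner (u v : vec2) : R := fst u * fst v + snd u * snd v.
Definition norm2 (u : vec2) : R := sqrt (inner u u).

Fixpoint sumR (f : nat -> R) (n : nat) : R :=
  match n with O => 0 | S k => sumR f k + f k end.

Fixpoint minR (f : nat -> R) (k : nat) : R :=
  match k with O => f O | S j => Rmin (minR f j) (f (S j)) end.

Definition F (n : nat) (x : nat -> vec2) (w : vec2) : R :=
  / INR n * sumR (fun i => ln (1 + exp (- inner w (x i)))) n.

Definition gradF (n : nat) (x : nat -> vec2) (w : vec2) : vec2 :=
  (Derive (fun s => F n x (s, snd w)) (fst w),
   Derive (fun s => F n x (fst w, s)) (snd w)).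

Fixpoint gd (n : nat) (x : nat -> vec2) (eta : R) (t : nat) : vec2 :=
  match t with
  | O => (0, 0)
  | S k => let w := gd n x eta k in
           let g := gradF n x w in
           (fst w - eta * fst g, snd w - eta * snd g)
  end.

(* margin of w on the data: min_{i < n} <w, x_i>   (meaningful for n >= 1) *)
Definition margin (n : nat) (x : nat -> vec2) (w : vec2) : R :=
  minR (fun i => inner w (x i)) (n - 1).

Definition eta0 (n : nat) (gamma : R) : R :=
  Rmax (INR n) (32 / gamma ^ 2 * ln (256 / gamma ^ 2)).

Definition lambda_tilde (eta gamma : R) : R := ln (8 * eta) / gamma.

(* Main.v *)
Require Import Defs.
From Stdlib Require Import Reals Lra Lia Classical.
From Coquelicot Require Import Coquelicot.
Open Scope R_scope.

Definition p (z : R) : R := exp (- z) / (1 + exp (- z)).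

Lemma is_derive_sumR (f : nat -> R -> R) (df : nat -> R) m s :
  (forall i, is_derive (f i) s (df i)) ->
  is_derive (fun y => sumR (fun i => f i y) m) s (sumR df m).
Proof.
  intros H. induction m as [|m IH]; simpl.
  - exact (is_derive_const (V:=R_NormedModule) 0 s).
  - exact (is_derive_plus _ _ _ _ _ IH (H m)).
Qed.

Lemma t1 a c s: is_derive (fun s => ln (1 + exp (- (s*a + c)))) s (- p (s*a+c) * a).
Proof. unfold p. auto_derive. pose proof (exp_pos (- (s * a + c))); lra. field.
  pose proof (exp_pos (- (s * a + c))); lra. Qed.

Lemma t2 a c s: is_derive (fun s => ln (1 + exp (- (c + s*a)))) s (- p (c + s*a) * a).
Proof. unfold p. auto_derive. pose proof (exp_pos (- (c + s * a))); lra. field.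
  pose proof (exp_pos (- (c + s * a))); lra. Qed.

Lemma grad_fst n x w: fst (gradF n x w) = /INR n * sumR (fun i => - p (inner w (x i)) * fst (x i)) n.
Proof.
  unfold gradF; simpl. apply is_derive_unique. unfold F.
  apply is_derive_scal. apply (is_derive_sumR (fun i s => ln (1 + exp (- inner (s, snd w) (x i))))).
  intros i. unfold inner; simpl. apply t1.
Qed.

Lemma grad_snd n x w: snd (gradF n x w) = /INR n * sumR (fun i => - p (inner w (x i)) * snd (x i)) n.
Proof.
  unfold gradF; simpl. apply is_derive_unique. unfold F.
  apply is_derive_scal. apply (is_derive_sumR (fun i s => ln (1 + exp (- inner (fst w, s) (x i))))).
  intros i. unfold inner; simpl. apply t2.
Qed.

Lemma sum_comb (a b : nat -> R) c1 c2 m :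
  c1 * sumR a m + c2 * sumR b m = sumR (fun i => c1 * a i + c2 * b i) m.
Proof. induction m; simpl; [ring|]. rewrite <- IHm. ring. Qed.

Lemma step n x eta w ws :
  inner (fst w - eta * fst (gradF n x w), snd w - eta * snd (gradF n x w)) ws - inner w ws
  = eta * / INR n * sumR (fun i => p (inner w (x i)) * inner (x i) ws) n.
Proof.
  rewrite grad_fst, grad_snd.
  set (S1 := sumR (fun i : nat => - p (inner w (x i)) * fst (x i)) n).
  set (S2 := sumR (fun i : nat => - p (inner w (x i)) * snd (x i)) n).
  set (S3 := sumR (fun i : nat => p (inner w (x i)) * inner (x i) ws) n).
  assert (E0: fst ws * S1 + snd ws * S2 = - S3).
  2:{ unfold inner at 1 2; simpl. transitivity (- eta * / INR n * (fst ws * S1 + snd ws * S2)). ring.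
      rewrite E0. ring. }
  unfold S1, S2, S3. rewrite sum_comb.
  assert (E: forall m, sumR (fun i => fst ws * (- p (inner w (x i)) * fst (x i)) +
     snd ws * (- p (inner w (x i)) * snd (x i))) m = - sumR (fun i => p (inner w (x i)) * inner (x i) ws) m).
  { induction m; simpl. ring. rewrite IHm. unfold inner. ring. }
  rewrite E. reflexivity.
Qed.

Lemma minR_le f k i : (i <= k)%nat -> minR f k <= f i.
Proof.
  induction k as [|k IH]; intros Hi; simpl.
  - inversion Hi; subst; lra.
  - destruct (Nat.eq_dec i (S k)) as [->|Hne]. apply Rmin_r.
    eapply Rle_trans. apply Rmin_l. apply IH. lia.
Qed.

Lemma minR_pos f k : (forall i, (i <= k)%nat -> 0 < f i) -> 0 < minR f k.
Proof.
  induction k as [|k IH]; intros H; simpl. apply H; lia.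
  apply Rmin_glb_lt. apply IH; intros; apply H; lia. apply H; lia.
Qed.

Lemma sumR_term f m j : (forall i, (i < m)%nat -> 0 <= f i) -> (j < m)%nat -> f j <= sumR f m.
Proof.
  induction m as [|m IH]; intros H Hj; simpl. lia.
  destruct (Nat.eq_dec j m) as [->|Hne].
  - assert (0 <= sumR f m). { clear IH Hj. induction m; simpl. lra.
      assert (0 <= f m) by (apply H; lia). assert (0 <= sumR f m) by (apply IHm; intros; apply H; lia). lra. }
    lra.
  - assert (f j <= sumR f m) by (apply IH; [intros; apply H; lia| lia]).
    assert (0 <= f m) by (apply H; lia). lra.
Qed.

Lemma sumR_le f g m : (forall i, (i < m)%nat -> f i <= g i) -> sumR f m <= sumR g m.
Proof.
  induction m as [|m IH]; intros H; simpl. lra.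
  assert (sumR f m <= sumR g m) by (apply IH; intros; apply H; lia).
  assert (f m <= g m) by (apply H; lia). lra.
Qed.

Lemma sumR_scal c f m : sumR (fun i => c * f i) m = c * sumR f m.
Proof. induction m; simpl. ring. rewrite IHm. ring. Qed.

Lemma sumR_scalr c f m : sumR (fun i => f i * c) m = sumR f m * c.
Proof. induction m; simpl. ring. rewrite IHm. ring. Qed.

Lemma sumR_const c m : sumR (fun _ => c) m = INR m * c.
Proof. induction m; cbn [sumR]. simpl; ring. rewrite IHm, S_INR. ring. Qed.

Lemma ln_le_sub1 y : 0 < y -> ln y <= y - 1.
Proof.
  intros Hy. rewrite <- (ln_exp (y - 1)). apply ln_le. lra.
  pose proof (exp_ineq1_le (y - 1)). lra.
Qed.

Lemma p_pos z : 0 < p z.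
Proof. unfold p. pose proof (exp_pos (-z)). apply Rdiv_lt_0_compat; lra. Qed.

Lemma p_half z : 1 <= exp (- z) -> 1/2 <= p z.
Proof.
  intros H. unfold p. set (u := exp (-z)) in *.
  apply Rmult_le_reg_r with (1 + u). lra.
  replace (u / (1 + u) * (1 + u)) with u by (field; lra). lra.
Qed.

Lemma p_ln z : exp (- z) < 1 -> ln (1 + exp (- z)) / 2 <= p z.
Proof.
  intros H. unfold p. set (u := exp (-z)) in *.
  assert (Hu : 0 < u) by apply exp_pos.
  assert (ln (1 + u) <= u).
  { rewrite <- (ln_exp u) at 2. apply ln_le. lra. pose proof (exp_ineq1_le u); lra. }
  apply Rmult_le_reg_r with (2 * (1 + u)). lra.
  unfold Rdiv. replace (u * / (1 + u) * (2 * (1 + u))) with (2 * u) by (field; lra).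
  replace (ln (1 + u) * / 2 * (2 * (1 + u))) with (ln (1 + u) * (1 + u)) by field.
  assert (0 <= ln (1 + u)) by (rewrite <- ln_1; apply ln_le; lra).
  nra.
Qed.

Lemma sum_p_lower n x w eta :
  (0 < n)%nat -> INR n <= eta ->
  / (8 * eta) < F n x w ->
  INR n / (16 * eta) <= sumR (fun i => p (inner w (x i))) n.
Proof.
  intros Hn Hne HF.
  assert (HN : 0 < INR n) by (apply lt_0_INR; lia).
  assert (He : 0 < eta) by lra.
  assert (Hpos : forall i, (i < n)%nat -> 0 <= p (inner w (x i))) by (intros; left; apply p_pos).
  destruct (classic (exists j, (j < n)%nat /\ 1 <= exp (- inner w (x j)))) as [[j [Hj Hu]]|Hno].
  - assert (1/2 <= p (inner w (x j))) by (apply p_half; auto).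
    assert (p (inner w (x j)) <= sumR (fun i => p (inner w (x i))) n) by (apply (sumR_term (fun i => p (inner w (x i)))); auto).
    assert (INR n / (16 * eta) <= 1/16).
    { unfold Rdiv. apply Rmult_le_reg_r with (16 * eta). lra.
      rewrite Rmult_assoc, Rinv_l by lra. lra. }
    lra.
  - assert (Hle : sumR (fun i => ln (1 + exp (- inner w (x i))) / 2) n <= sumR (fun i => p (inner w (x i))) n).
    { apply sumR_le. intros i Hi. apply p_ln. apply Rnot_le_lt. intros C. apply Hno. eauto. }
    unfold Rdiv in Hle. rewrite (sumR_scalr (/2) (fun i => ln (1 + exp (- inner w (x i))))) in Hle.
    unfold F in HF. set (S := sumR (fun i : nat => ln (1 + exp (- inner w (x i)))) n) in *.
    assert (INR n / (8 * eta) < S).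
    { apply Rmult_lt_compat_l with (r := INR n) in HF; auto.
      rewrite <- Rmult_assoc, Rinv_r, Rmult_1_l in HF by lra. unfold Rdiv. lra. }
    unfold Rdiv in *. rewrite Rinv_mult in *. lra.
Qed.

Lemma numeric g eta : 0 < g -> g <= 1 -> 32 / g ^ 2 * ln (256 / g ^ 2) <= eta ->
  8 * (ln (8 * eta) / g) <= g * eta / 2.
Proof.
  intros Hg Hg1 He.
  set (a := g ^ 2) in *.
  assert (Ha : 0 < a) by (unfold a; simpl; nra).
  assert (Ha1 : a <= 1) by (unfold a; simpl; nra).
  set (L := ln (256 / a)) in *.
  assert (HL : 1 <= L).
  { unfold L. rewrite <- ln_exp with 1. apply ln_le. apply exp_pos.
    pose proof exp_le_3. apply Rle_trans with 256. lra.
    unfold Rdiv. rewrite <- (Rmult_1_r 256) at 1. apply Rmult_le_compat_l. lra.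
    rewrite <- Rinv_1. apply Rinv_le_contravar; lra. }
  set (e1 := 32 / a * L) in *.
  assert (He1 : 0 < e1) by (unfold e1; apply Rmult_lt_0_compat; [apply Rdiv_lt_0_compat|]; lra).
  assert (Hae1 : a * e1 = 32 * L) by (unfold e1; field; lra).
  assert (H8 : ln (8 * e1) = L + ln L).
  { replace (8 * e1) with (256 / a * L) by (unfold e1; field; lra).
    rewrite ln_mult. reflexivity. apply Rdiv_lt_0_compat; lra. lra. }
  assert (HlnL : ln L <= L - 1) by (apply ln_le_sub1; lra).
  assert (Heta : 0 < eta) by lra.
  assert (H8e : ln (8 * eta) = ln (8 * e1) + ln (eta / e1)).
  { rewrite <- ln_mult. f_equal. field. lra. lra. apply Rdiv_lt_0_compat; lra. }
  assert (Hq : ln (eta / e1) <= eta / e1 - 1) by (apply ln_le_sub1; apply Rdiv_lt_0_compat; lra).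
  assert (Hk : 16 * (eta / e1 - 1) <= a * (eta - e1)).
  { replace (16 * (eta / e1 - 1)) with ((eta - e1) * (16 / e1)) by (field; lra).
    replace (a * (eta - e1)) with ((eta - e1) * a) by ring.
    apply Rmult_le_compat_l. lra.
    apply Rmult_le_reg_r with e1. lra. replace (16 / e1 * e1) with 16 by (field; lra). lra. }
  assert (Hmain : 16 * ln (8 * eta) <= a * eta) by lra.
  unfold a in Hmain. simpl in Hmain.
  apply Rmult_le_reg_r with (2 * g). lra.
  replace (8 * (ln (8 * eta) / g) * (2 * g)) with (16 * ln (8 * eta)) by (field; lra).
  replace (g * eta / 2 * (2 * g)) with (g * (g * 1) * eta) by field. lra.
Qed.

Theorem lemma2
  (n : nat) (x : nat -> vec2)
  (Hn : (0 < n)%nat)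
  (Hx : forall i, (i < n)%nat -> norm2 (x i) <= 1)
  (Hsep : exists w : vec2, forall i, (i < n)%nat -> 0 < inner w (x i))
  (wstar : vec2) (gamma : R)
  (Hwstar : norm2 wstar = 1)
  (Hmax : forall w : vec2, norm2 w = 1 -> margin n x w <= margin n x wstar)
  (Hgamma : gamma = margin n x wstar)
  (eta : R) (Heta : 0 < eta) :
  (forall t : nat, inner (gd n x eta t) wstar < inner (gd n x eta (S t)) wstar)
  /\
  (eta0 n gamma <= eta ->
     (forall t : nat, (1 <= t)%nat ->
        (forall s : nat, (s < t)%nat -> / (8 * eta) < F n x (gd n x eta s)) ->
        gamma * eta / 2 + gamma * (INR t - 1) / 16 <= inner (gd n x eta t) wstar)
     /\
     (forall t : nat, (1 <= t)%nat ->
        8 * lambda_tilde eta gamma <= inner (gd n x eta t) wstar)).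
Proof.
  assert (HN : 0 < INR n) by (apply lt_0_INR; lia).
  assert (Hgi : forall i, (i < n)%nat -> gamma <= inner (x i) wstar).
  { intros i Hi. rewrite Hgamma. unfold margin.
    replace (inner (x i) wstar) with ((fun i => inner wstar (x i)) i) by (unfold inner; simpl; ring).
    apply (minR_le (fun i => inner wstar (x i))). lia. }
  assert (Hgpos : 0 < gamma).
  { destruct Hsep as [w Hw].
    assert (Hw0 := Hw 0%nat Hn).
    set (N := inner w w).
    assert (HNp : 0 < N).
    { unfold N, inner in *. destruct w as [w1 w2]; simpl in *.
      destruct (Req_dec w1 0); destruct (Req_dec w2 0); try nra.
      }
    set (c := / sqrt N).
    assert (Hs : 0 < sqrt N) by (apply sqrt_lt_R0; lra).
    assert (Hc : 0 < c) by (apply Rinv_0_lt_compat; lra).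
    set (w' := (c * fst w, c * snd w)).
    assert (Hw' : norm2 w' = 1).
    { unfold norm2. replace (inner w' w') with (c * c * N) by (unfold w', N, inner; simpl; ring).
      replace (c * c * N) with 1. apply sqrt_1.
      unfold c. rewrite <- (sqrt_sqrt N) at 3 by lra. field. lra. }
    specialize (Hmax w' Hw').
    assert (0 < margin n x w').
    { unfold margin. apply minR_pos. intros i Hi.
      replace (inner w' (x i)) with (c * inner w (x i)) by (unfold w', inner; simpl; ring).
      apply Rmult_lt_0_compat; auto. apply Hw. lia. }
    lra. }
  assert (Hg1 : gamma <= 1).
  { assert (H0 := Hgi 0%nat Hn). assert (Hx0 := Hx 0%nat Hn).
    pose proof (sqrt_cauchy (fst (x 0%nat)) (snd (x 0%nat)) (fst wstar) (snd wstar)) as C.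
    unfold Rsqr in C. unfold norm2, inner in *.
    assert (0 <= sqrt (fst (x 0%nat) * fst (x 0%nat) + snd (x 0%nat) * snd (x 0%nat))) by apply sqrt_pos.
    nra. }
  set (hat := fun t => inner (gd n x eta t) wstar).
  assert (Hstep : forall t, hat (S t) - hat t =
     eta * / INR n * sumR (fun i => p (inner (gd n x eta t) (x i)) * inner (x i) wstar) n).
  { intros t. unfold hat. cbn [gd]. apply step. }
  assert (Hinc : forall t, gamma * eta * / INR n * sumR (fun i => p (inner (gd n x eta t) (x i))) n
                            <= hat (S t) - hat t).
  { intros t. rewrite Hstep.
    replace (gamma * eta * / INR n * sumR (fun i => p (inner (gd n x eta t) (x i))) n)
      with (eta * / INR n * sumR (fun i => p (inner (gd n x eta t) (x i)) * gamma) n)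
      by (rewrite sumR_scalr; ring).
    apply Rmult_le_compat_l. left. apply Rmult_lt_0_compat; auto. apply Rinv_0_lt_compat; lra.
    apply sumR_le. intros i Hi. apply Rmult_le_compat_l. left; apply p_pos. auto. }
  assert (Hsp : forall t, 0 < sumR (fun i => p (inner (gd n x eta t) (x i))) n).
  { intros t. eapply Rlt_le_trans. 2: apply (sumR_term (fun i => p (inner (gd n x eta t) (x i))) n 0%nat).
    apply p_pos. intros; left; apply p_pos. auto. }
  assert (Hmono : forall t, hat t < hat (S t)).
  { intros t. specialize (Hinc t). specialize (Hsp t).
    assert (0 < gamma * eta * / INR n * sumR (fun i => p (inner (gd n x eta t) (x i))) n).
    { repeat apply Rmult_lt_0_compat; auto. apply Rinv_0_lt_compat; lra. }
    lra. }
  assert (Hhat1 : gamma * eta / 2 <= hat 1%nat).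
  { specialize (Hinc 0%nat).
    assert (E: sumR (fun i => p (inner (gd n x eta 0%nat) (x i))) n = INR n * (1/2)).
    { change (gd n x eta 0%nat) with ((0,0) : vec2). rewrite <- sumR_const. clear. induction n; cbn [sumR]. reflexivity. rewrite IHn. f_equal.
      unfold p, inner; simpl. replace (- (0 * fst (x n) + 0 * snd (x n))) with 0 by ring.
      rewrite exp_0. field. }
    rewrite E in Hinc. unfold hat in Hinc at 2. simpl gd in Hinc.
    replace (inner (0, 0) wstar) with 0 in Hinc by (unfold inner; simpl; ring).
    replace (gamma * eta * / INR n * (INR n * (1 / 2))) with (gamma * eta / 2) in Hinc by (field; lra).
    lra. }
  split.
  { intros t. apply Hmono. }
  intros Heta0.
  assert (HnE : INR n <= eta) by (eapply Rle_trans; [apply Rmax_l| exact Heta0]).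
  assert (HlE : 32 / gamma ^ 2 * ln (256 / gamma ^ 2) <= eta) by (eapply Rle_trans; [apply Rmax_r| exact Heta0]).
  split.
  - intros t Ht. induction t as [|t IH]. lia.
    intros Hs. destruct (Nat.eq_dec t 0) as [->|Ht0].
    + simpl INR. fold (hat 1%nat). lra.
    + assert (IH' := IH ltac:(lia) ltac:(intros s Hst; apply Hs; lia)).
      fold (hat t) in IH'. fold (hat (S t)).
      assert (Hl := sum_p_lower n x (gd n x eta t) eta Hn HnE (Hs t ltac:(lia))).
      specialize (Hinc t).
      assert (gamma / 16 <= gamma * eta * / INR n * sumR (fun i => p (inner (gd n x eta t) (x i))) n).
      { apply Rle_trans with (gamma * eta * / INR n * (INR n / (16 * eta))).
        right. field. lra.
        apply Rmult_le_compat_l. left. repeat apply Rmult_lt_0_compat; auto. apply Rinv_0_lt_compat; lra.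
        exact Hl. }
      rewrite S_INR. lra.
  - intros t Ht.
    assert (Hmt : forall k, hat 1%nat <= hat (S k)).
    { induction k. lra. specialize (Hmono (S k)). lra. }
    destruct t as [|k]. lia.
    fold (hat (S k)). specialize (Hmt k).
    pose proof (numeric gamma eta Hgpos Hg1 HlE).
    unfold lambda_tilde. lra.
Qed.
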